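(* Let $G$ be a finite group and $p$ a prime dividing $|G|$. Let $S^{\min}_{G/G}$ be the smallest covering sieve on $G/G$ for the sipp topology on $\mathcal{O}(G)$, viewed as a presheaf of sets on $\mathcal{O}(G)$. Then its restriction to $\mathcal{O}_p(G)$ is a terminal object of $\mathrm{PSh}(\mathcal{O}_p(G))$, and its restriction to $\mathcal{O}^{\circ}_p(G)$ is a terminal object of $\mathrm{PSh}(\mathcal{O}^{\circ}_p(G))$.
   Context: $\mathcal{O}(G)$ is the category of orbits $G/H$ and $G$-maps; $\mathcal{O}_p(G)$ (resp. $\mathcal{O}^{\circ}_p(G)$) its full subcategory on $G/Q$ with $Q$ a $p$-subgroup (resp. non-trivial $p$-subgroup). A sieve on $x$ is a set of morphisms with codomain $x$ closed under precomposition, equivalently a subfunctor of $\mathrm{Hom}(-,x)$. The sipp topology: a sieve on $G/H$ is covering iff it contains the projection $G/P_H\to G/H$ for a Sylow $p$-subgroup $P_H$ of $H$. $\mathrm{PSh}$ denotes presheaves of sets. *)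

(* Defs.v *)
From mathcomp Require Import all_boot all_fingroup all_solvable.

Set Implicit Arguments.
Unset Strict Implicit.
Unset Printing Implicit Defensive.

Local Open Scope group_scope.

Section OrbitCategory.
Variables (gT : finGroupType) (G : {group gT}).

(* The orbit G/H is modelled as the set [lcosets H G] of left cosets xH,
   x in G, with G acting by left multiplication g.(xH) = (gx)H.
   A G-map G/H -> G/K is a finite function on sets of elements that maps
   G/H equivariantly into G/K, and is normalised to set0 outside G/H
   (so that equality of G-maps is plain equality). *)
Definition Gmap_ff := {ffun {set gT} -> {set gT}}.

Definition is_Gmap (H K : {set gT}) (f : Gmap_ff) : bool :=
  [forall C : {set gT},
     if C \in lcosets H G then
       (f C \in lcosets K G) && [forall g in G, f (g *: C) == g *: f C]
     else f C == set0].

Definition Gid (H : {set gT}) : Gmap_ff :=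
  [ffun C => if C \in lcosets H G then C else set0].
Definition Gcomp (f g : Gmap_ff) : Gmap_ff := [ffun C => f (g C)].
Definition Gproj (H K : {set gT}) : Gmap_ff :=
  [ffun C => if C \in lcosets H G then C * K else set0].

Definition Ob (ob : pred {group gT}) := {H : {group gT} | (H \subset G) && ob H}.
Definition Ohom (ob : pred {group gT}) (x y : Ob ob) :=
  {f : Gmap_ff | is_Gmap (val x) (val y) f}.

Lemma Ob_sub (ob : pred {group gT}) (x : Ob ob) : val x \subset G.
Proof. by case/andP: (valP x). Qed.

Record sieve (K : {group gT}) := Sieve {
  sv_mem :> {group gT} -> pred Gmap_ff;
  sv_hom : forall (H : {group gT}) f, sv_mem H f -> (H \subset G) && is_Gmap H K f;
  sv_closed : forall (H H' : {group gT}) (f g : Gmap_ff),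
      H' \subset G -> sv_mem H f -> is_Gmap H' H g -> sv_mem H' (Gcomp f g) }.

Definition sipp_covering (p : nat) (K : {group gT}) (S : sieve K) : Prop :=
  exists P : {group gT}, P \in 'Syl_p(K) /\ S P (Gproj P K).

Definition smallest_covering (p : nat) (K : {group gT}) (S : sieve K) : Prop :=
  sipp_covering p S /\
  forall S' : sieve K, sipp_covering p S' ->
    forall (H : {group gT}) f, S H f -> S' H f.

Record psh_data (ob : pred {group gT}) := PshData {
  ps_ob : Ob ob -> Type;
  ps_map : forall x y : Ob ob, Ohom x y -> ps_ob y -> ps_ob x }.

Definition is_presheaf (ob : pred {group gT}) (F : psh_data ob) : Prop :=
  (forall (x : Ob ob) (i : Ohom x x) (a : ps_ob F x),
      val i = Gid (val x) -> ps_map i a = a) /\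
  (forall (x y z : Ob ob) (g : Ohom x y) (f : Ohom y z) (h : Ohom x z)
          (a : ps_ob F z),
      val h = Gcomp (val f) (val g) -> ps_map h a = ps_map g (ps_map f a)).

Definition is_natural (ob : pred {group gT}) (X F : psh_data ob)
  (eta : forall x, ps_ob X x -> ps_ob F x) : Prop :=
  forall (x y : Ob ob) (f : Ohom x y) (a : ps_ob X y),
    eta x (ps_map f a) = ps_map f (eta y a).

Definition is_terminal_psh (ob : pred {group gT}) (F : psh_data ob) : Prop :=
  is_presheaf F /\
  forall X : psh_data ob, is_presheaf X ->
    (exists eta, @is_natural ob X F eta) /\
    forall eta eta', @is_natural ob X F eta -> @is_natural ob X F eta' ->
      forall x a, eta x a = eta' x a.

(* The restriction of a sieve S on G/K (viewed as a presheaf on O(G),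
   S(G/H) = morphisms G/H -> G/K in S, acting by precomposition)
   to the full subcategory [Ob ob]. *)
Definition sieve_psh (ob : pred {group gT}) (K : {group gT}) (S : sieve K)
  : psh_data ob :=
  @PshData ob (fun x => {f : Gmap_ff | S (val x) f})
    (fun x y g a => exist _ (Gcomp (val a) (val g))
                      (sv_closed (Ob_sub x) (valP a) (valP g))).

End OrbitCategory.

(* O_p(G): p-subgroups; O°_p(G): non-trivial p-subgroups. *)
Definition p_ob (gT : finGroupType) (p : nat) : pred {group gT} :=
  fun H => p.-group H.
Definition pnt_ob (gT : finGroupType) (p : nat) : pred {group gT} :=
  fun H => p.-group H && (H :!=: 1).

(* Main.v *)
Require Import Defs.
From mathcomp Require Import all_boot all_fingroup all_solvable.

Set Implicit Arguments.
Unset Strict Implicit.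
Unset Printing Implicit Defensive.

Section Helpers.
Local Open Scope group_scope.
Variables (gT : finGroupType) (G : {group gT}).

Lemma lcosets_GG (C : {set gT}) : C \in lcosets G G -> C = G.
Proof. by case/lcosetsP=> x xG ->; rewrite lcoset_id. Qed.

Lemma Gmap_G_uniq (H : {set gT}) f f' :
  is_Gmap G H G f -> is_Gmap G H G f' -> f = f'.
Proof.
move=> /forallP hf /forallP hf'; apply/ffunP=> C.
move: (hf C) (hf' C); case: ifP => _.
  by case/andP=> /lcosets_GG -> _ /andP[/lcosets_GG -> _].
by move=> /eqP -> /eqP ->.
Qed.

Lemma lcosets_in (H : {group gT}) C g :
  C \in lcosets H G -> g \in G -> g *: C \in lcosets H G.
Proof.
case/lcosetsP=> y yG ->; move=> gG; apply/lcosetsP; exists (g * y).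
  by rewrite groupM.
by rewrite lcosetM.
Qed.

Lemma set0_notin (H : {group gT}) : (set0 \in lcosets H G) = false.
Proof.
apply/negbTE/negP; case/lcosetsP=> y _ e.
by move: (lcoset_refl H y); rewrite -e inE.
Qed.

Lemma Gcomp_Gmap (H K L : {group gT}) f g :
  is_Gmap G H K g -> is_Gmap G K L f -> is_Gmap G H L (Gcomp f g).
Proof.
move=> /forallP hg /forallP hf; apply/forallP=> C; rewrite !ffunE.
move: (hg C); case: ifP => CH.
  case/andP=> gC /forallP eg; move: (hf (g C)); rewrite gC.
  case/andP=> -> /forallP ef /=; apply/forallP=> a; apply/implyP=> aG.
  rewrite !ffunE (eqP (implyP (eg a) aG)).
  exact: (implyP (ef a) aG).
move/eqP ->; move: (hf set0); rewrite set0_notin //.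
Qed.

Definition cmap (H K : {set gT}) (z : gT) : Gmap_ff gT :=
  [ffun C => if C \in lcosets H G then C * (z *: K) else set0].

Lemma cosetJ (H K : {group gT}) y z :
  H :^ z \subset K -> (y *: H) * (z *: K) = (y * z) *: K.
Proof.
move=> sHK.
have e1 : H * [set z] = z *: (H :^ z).
  by rewrite conjsgE mulgA mulg_set1 mulgV -set1gE mul1g.
rewrite -!mulgA (mulgA H) e1 -!mulgA.
have e2 : (H :^ z) * K = K by rewrite -[H :^ z]/(gval (H :^ z)%G) mulSGid.
by rewrite e2 !mulgA mulg_set1.
Qed.

Lemma cmap_Gmap (H K : {group gT}) z :
  z \in G -> H :^ z \subset K -> is_Gmap G H K (cmap H K z).
Proof.
move=> zG sHK; apply/forallP=> C; rewrite ffunE; case CH: (C \in lcosets H G); last by [].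
apply/andP; split.
  case/lcosetsP: CH => y yG ->; rewrite cosetJ //.
  by apply/lcosetsP; exists (y * z); rewrite ?groupM.
apply/forallP=> a; apply/implyP=> aG; rewrite ffunE lcosets_in //.
by rewrite -!mulgA.
Qed.

Lemma Gproj_Gmap (H : {group gT}) : H \subset G -> is_Gmap G H G (Gproj G H G).
Proof.
move=> sHG.
have -> : Gproj G H G = cmap H G 1 by apply/ffunP=> C; rewrite !ffunE lcoset1.
by apply: cmap_Gmap; rewrite ?group1 ?conjsg1.
Qed.

Lemma pgroup_of_Gmap p (H' H : {group gT}) g :
  H' \subset G -> is_Gmap G H' H g -> p.-group H -> p.-group H'.
Proof.
move=> sH'G /forallP hg pH.
have H'in : (H' : {set gT}) \in lcosets H' G.
  by apply/lcosetsP; exists 1; rewrite ?group1 ?lcoset1.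
move: (hg H'); rewrite H'in => /andP[/lcosetsP[y yG ey] /forallP eg].
have sJ : H' :^ y \subset H.
  apply/subsetP=> _ /imsetP[h hH' ->].
  have hG : h \in G by apply: (subsetP sH'G).
  move: (implyP (eg h) hG); rewrite lcoset_id // ey -lcosetM => /eqP e.
  have : h * y \in y *: H by rewrite e lcoset_refl.
  by rewrite mem_lcoset conjgE mulgA.
rewrite -(pgroupJ p H' y).
exact: pgroupS sJ pH.
Qed.

Lemma cover_all (p : nat) (S : sieve G G) (H : {group gT}) f :
  sipp_covering p S -> H \subset G -> p.-group H -> is_Gmap G H G f -> S H f.
Proof.
case=> P [sylP SP] sHG pH hf.
rewrite inE in sylP.
have [z zG sJ] := Sylow_Jsub sylP sHG pH.
have /andP[sPG hP] := sv_hom SP.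
have := sv_closed sHG SP (cmap_Gmap zG sJ).
by rewrite (Gmap_G_uniq hf (Gcomp_Gmap (cmap_Gmap zG sJ) hP)).
Qed.

Lemma terminal_single (ob : pred {group gT}) (F : psh_data G ob) :
  (forall x, ps_ob F x) -> (forall x (a b : ps_ob F x), a = b) ->
  is_terminal_psh F.
Proof.
move=> el un; split; first by split=> *; apply: un.
move=> X _; split; first by exists (fun x _ => el x) => ????; apply: un.
by move=> *; apply: un.
Qed.

Lemma sieve_terminal (p : nat) (ob : pred {group gT}) (S : sieve G G) :
  (forall H, ob H -> p.-group H) -> sipp_covering p S ->
  is_terminal_psh (@sieve_psh gT G ob G S).
Proof.
move=> obp cov; apply: terminal_single.
  move=> x; have sxG := Ob_sub x.
  have px : p.-group (val x) by apply: obp; case/andP: (valP x).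
  exact: (exist _ (Gproj G (val x) G) (cover_all cov sxG px (Gproj_Gmap sxG))).
move=> x [f hf] [g hg].
have /andP[_ hf'] := sv_hom hf.
have /andP[_ hg'] := sv_hom hg.
have e : f = g := Gmap_G_uniq hf' hg'.
subst g; congr exist; exact: bool_irrelevance.
Qed.

End Helpers.

Theorem lemma4p4p1 (gT : finGroupType) (G : {group gT}) (p : nat) :
  prime p -> p %| #|G| ->
  (exists S : sieve G G, smallest_covering p S) /\
  forall S : sieve G G, smallest_covering p S ->
    is_terminal_psh (@sieve_psh gT G (@p_ob gT p) G S) /\
    is_terminal_psh (@sieve_psh gT G (@pnt_ob gT p) G S).
Proof.
move=> _ _; split.
  pose mem := fun (H : {group gT}) (f : Gmap_ff gT) =>
    [&& H \subset G, is_Gmap G H G f & pgroup p H].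
  have hom : forall (H : {group gT}) f, mem H f -> (H \subset G) && is_Gmap G H G f.
    by move=> H f /and3P[-> -> _].
  have cl : forall (H H' : {group gT}) (f g : Gmap_ff gT),
      H' \subset G -> mem H f -> is_Gmap G H' H g -> mem H' (Gcomp f g).
    move=> H H' f g sH'G /and3P[sHG hf pH] hg.
    by rewrite /mem sH'G (Gcomp_Gmap hg hf) (pgroup_of_Gmap sH'G hg pH).
  exists (Sieve hom cl); split.
    have [P sylP] := Sylow_exists p G.
    exists P; split; first by rewrite inE.
    by rewrite /= /mem (pHall_sub sylP) (pHall_pgroup sylP) Gproj_Gmap ?(pHall_sub sylP).
  move=> S' cov H f /= /and3P[sHG hf pH].
  exact: cover_all cov sHG pH hf.
move=> S [cov _]; split.
  by apply: (sieve_terminal (p := p)) => // H.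
apply: (sieve_terminal (p := p)) => // H /andP[] //.
Qed.
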